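(* Let $X$ be a Tychonoff space and $\mathcal{P}$ an ideal of closed subsets of $X$. If $X$ is a $P$-space (every $G_\delta$-subset of $X$ is open), then $C(X)_\mathcal{P}$ is a regular ring, i.e. for every $f\in C(X)_\mathcal{P}$ there is $g\in C(X)_\mathcal{P}$ with $f=f^2g$.
   Context: An ideal of closed subsets of $X$ is a family $\mathcal{P}$ of closed subsets closed under finite unions and under passing to closed subsets. $D_f$ is the set of discontinuity points of $f\in\mathbb{R}^X$; $C(X)_\mathcal{P}=\{f\in\mathbb{R}^X\colon\overline{D_f}\in\mathcal{P}\}$ with pointwise operations. (A space with $C(X)_\mathcal{P}$ regular is called a $\mathcal{P}P$-space.) *)

(* Defs.v *)
From HB Require Import structures.
From mathcomp Require Import all_boot all_order all_algebra.
From mathcomp Require Import all_classical all_reals all_analysis.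
Set Implicit Arguments. Unset Strict Implicit. Unset Printing Implicit Defensive.
Import Order.TTheory GRing.Theory Num.Theory.
Import numFieldNormedType.Exports.
Local Open Scope classical_set_scope.
Local Open Scope ring_scope.

Definition tychonoff_space (R : realType) (X : topologicalType) : Prop :=
  hausdorff_space X /\
  forall (B : set X) (a : X), closed B -> ~ B a ->
    exists f : X -> R, continuous f /\ f a = 0 /\ (forall b, B b -> f b = 1).

Definition closed_ideal (X : topologicalType) (P : set (set X)) : Prop :=
  (forall A, P A -> closed A) /\
  (forall A B, P A -> P B -> P (A `|` B)) /\
  (forall A B, P A -> closed B -> B `<=` A -> P B).

Definition P_space (X : topologicalType) : Prop :=
  forall U : nat -> set X, (forall n, open (U n)) -> open (\bigcap_n U n).

Definition discont (R : realType) (X : topologicalType) (f : X -> R) : set X :=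
  [set x | ~ {for x, continuous f}].

Definition CP (R : realType) (X : topologicalType) (P : set (set X)) : set (X -> R) :=
  [set f | P (closure (discont f))].

(* Main.v *)
Require Import Defs.
From HB Require Import structures.
From mathcomp Require Import all_boot all_order all_algebra.
From mathcomp Require Import all_classical all_reals all_analysis.
Import Order.TTheory GRing.Theory Num.Theory.
Import numFieldNormedType.Exports.
Local Open Scope classical_set_scope.
Local Open Scope ring_scope.

Lemma discont_inv (R : realType) (X : topologicalType) (f : X -> R) :
  P_space X -> discont (fun x => (f x)^-1) `<=` discont f.
Proof.
move=> PX x; rewrite /discont /= => ng; apply: contra_not ng => cf.
have [fx0|fx0] := eqVneq (f x) 0; last first.
  exact: (cvgV fx0 cf).
have hA : forall n : nat, nbhs x [set y | `|f y| < n.+1%:R^-1].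
  move=> n; have e0 : 0 < (n.+1%:R : R)^-1 by rewrite invr_gt0 ltr0Sn.
  have := @cvgr_dist_lt _ _ _ (nbhs x) (nbhs_filter x) f (f x) cf _ e0.
  by move=> h; apply: filterS h => y /=; rewrite fx0 sub0r normrN.
have /choice [B hB] : forall n : nat, exists B : set X,
    open_nbhs x B /\ B `<=` [set y | `|f y| < n.+1%:R^-1].
  by move=> n; have := hA n; rewrite nbhsE => -[B ? ?]; exists B.
have oC : open (\bigcap_n B n) by apply: PX => n; case: (hB n) => -[].
have Cx : (\bigcap_n B n) x by move=> n _; case: (hB n) => -[].
have nC : nbhs x (\bigcap_n B n) by apply: open_nbhs_nbhs; split.
have z0 : forall y, (\bigcap_n B n) y -> f y = 0.
  move=> y Cy; apply/eqP/negPn/negP => fy0.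
  have fy : 0 < `|f y| by rewrite normr_gt0.
  have [k] := ltr_add_invr fy.
  rewrite add0r => hk.
  have h1 : `|f y| < k.+1%:R^-1 := (hB k).2 y (Cy k I).
  by have := lt_trans h1 hk; rewrite ltxx.
move=> A /= nA; rewrite fx0 invr0 in nA.
apply: filterS nC => y Cy /=; rewrite z0 // invr0.
exact: nbhs_singleton nA.
Qed.

Theorem mainTheorem13 (R : realType) (X : topologicalType) (P : set (set X)) :
  tychonoff_space R X -> closed_ideal P -> P_space X ->
  forall f : X -> R, CP P f ->
    exists g : X -> R, CP P g /\ (forall x, f x = f x ^+ 2 * g x).
Proof.
move=> _ [_ [_ Pdown]] PX f Pf; exists (fun x => (f x)^-1); split.
  apply: (Pdown _ _ Pf); first exact: closed_closure.
  exact/closureS/discont_inv.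
move=> x; have [->|fx0] := eqVneq (f x) 0; first by rewrite invr0 mulr0.
by rewrite expr2 -mulrA mulfV // mulr1.
Qed.
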